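(* Let $\lambda$ be a countable limit ordinal and let $\rho<\lambda$ be an isolated ordinal. Then there are a surjection $\diamond_{\rho,\lambda}\colon [\rho,\lambda) \to \mathrm{LIM}((\rho,\lambda])$, a mapping $\ell_{\rho,\lambda}\colon [\rho,\lambda] \to \omega \setminus \{0\}$, and a mapping $a_{\rho,\lambda}\colon \mathrm{LIM}((\rho,\lambda]) \times \omega \to [\rho,\lambda)$ such that: (a) for every $\beta \in [\rho,\lambda)$ there exists a positive integer $s$ with $\beta < \diamond_{\rho,\lambda}(\beta) < \diamond_{\rho,\lambda}^2(\beta)<\dots<\diamond_{\rho,\lambda}^{s}(\beta)=\lambda$ (where $\diamond^k$ denotes the $k$-fold iterate); (b) for every $\mu \in \mathrm{LIM}((\rho,\lambda])$: the sequence $(a_{\rho,\lambda}(\mu,k))_{k=0}^{\infty}$ is increasing with limit $\mu$; $\diamond_{\rho,\lambda}^{-1}(\mu) = \{a_{\rho,\lambda}(\mu,k) : k \in \omega\}$; $\ell_{\rho,\lambda}(a_{\rho,\lambda}(\mu,k))=\ell_{\rho,\lambda}(\mu)+k$ for all $k\in\omega$; moreover $\ell_{\rho,\lambda}(\lambda) = 1$ and $\ell_{\rho,\lambda}(\rho) = 1$; (c) for every $\beta \in [\rho,\lambda)$ and every $\gamma \in (\beta,\diamond_{\rho,\lambda}(\beta))$ we have $\ell_{\rho,\lambda}(\gamma)>\ell_{\rho,\lambda}(\beta)$ and $\diamond_{\rho,\lambda}(\gamma)\le\diamond_{\rho,\lambda}(\beta)$; (d) for every $\beta \in [\rho,\lambda)$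 we have $\ell_{\rho,\lambda}(\beta+1)=\ell_{\rho,\lambda}(\beta)+1$.
   Context: An ordinal is isolated if it is not a limit ordinal (so $0$ and successor ordinals are isolated). For a set $A$ of ordinals, $\mathrm{LIM}(A)$ denotes the set of limit ordinals in $A$. Intervals such as $[\rho,\lambda)$ are intervals of ordinals. *)

(* Defs.v *)
(* Ordinals are modelled by an arbitrary strict well-order
   (T, lt): every ordinal up to lambda is an element of such an order, and
   any well-order with elements below lambda is isomorphic on [0,lambda] to
   the ordinal lambda+1. *)
From Stdlib Require Import Arith Wellfounded.

Section Ord.
Context {T : Type}.
Variable lt : T -> T -> Prop.

Definition is_well_order : Prop :=
  (forall x, ~ lt x x) /\
  (forall x y z, lt x y -> lt y z -> lt x z) /\
  (forall x y, lt x y \/ x = y \/ lt y x) /\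
  well_founded lt.

Definition le (x y : T) : Prop := lt x y \/ x = y.

Definition is_succ_of (y x : T) : Prop :=
  lt x y /\ forall z, lt x z -> le y z.

Definition isolated (x : T) : Prop :=
  (forall y, ~ lt y x) \/ exists y, is_succ_of x y.

Definition limit (x : T) : Prop := ~ isolated x.

Definition countable_upto (lam : T) : Prop :=
  exists f : T -> nat, forall x y, le x lam -> le y lam -> f x = f y -> x = y.

Definition in_co (a b x : T) : Prop := le a x /\ lt x b.
Definition in_cc (a b x : T) : Prop := le a x /\ le x b.
Definition in_oc (a b x : T) : Prop := lt a x /\ le x b.
Definition in_oo (a b x : T) : Prop := lt a x /\ lt x b.

Definition in_LIM_oc (a b mu : T) : Prop := in_oc a b mu /\ limit mu.

Definition increasing_to (s : nat -> T) (mu : T) : Prop :=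
  (forall k, lt (s k) (s (S k))) /\
  (forall k, lt (s k) mu) /\
  (forall g, lt g mu -> exists k, lt g (s k)).

End Ord.

(* Main.v *)
Require Import Defs.
From Stdlib Require Import Arith.
From Stdlib Require Import Lia Classical ClassicalEpsilon List FinFun.

Lemma nat_min (P : nat -> Prop) : (exists n, P n) -> exists n, P n /\ forall m, P m -> n <= m.
Proof.
  intros [n Hn]. revert Hn. induction n as [n IH] using (well_founded_induction Nat.lt_wf_0).
  intros Hn. destruct (classic (exists m, P m /\ m < n)) as [[m [Hm Hmn]]|Hno].
  - exact (IH m Hmn Hm).
  - exists n. split; auto. intros m Hm. destruct (Nat.lt_ge_cases m n); auto.
    exfalso; eauto.
Qed.

Lemma php (g : nat -> nat) N : (forall i j, g i = g j -> i = j) -> (forall k, g k <= N) -> False.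
Proof.
  intros Hinj Hb.
  assert (H1 : NoDup (map g (seq 0 (S (S N))))).
  { apply Injective_map_NoDup; [intros i j; apply Hinj | apply seq_NoDup]. }
  assert (H2 : incl (map g (seq 0 (S (S N)))) (seq 0 (S N))).
  { intros a Ha. apply in_map_iff in Ha. destruct Ha as [k [<- _]]. apply in_seq.
    specialize (Hb k). lia. }
  pose proof (NoDup_incl_length H1 H2) as H3.
  rewrite length_map, !length_seq in H3. lia.
Qed.

Section S.
Variable T : Type.
Variable lt : T -> T -> Prop.
Hypothesis Hwo : is_well_order lt.
Variables lam rho : T.
Variable f : T -> nat.
Hypothesis Hf : forall x y, Defs.le lt x lam -> Defs.le lt y lam -> f x = f y -> x = y.
Hypothesis Hlam : limit lt lam.
Hypothesis Hrho : isolated lt rho.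
Hypothesis Hrl : lt rho lam.

Local Notation "x <: y" := (lt x y) (at level 70).
Local Notation "x <=: y" := (Defs.le lt x y) (at level 70).

Lemma irr x : ~ x <: x. Proof. destruct Hwo as [H _]; apply H. Qed.
Lemma tr x y z : x <: y -> y <: z -> x <: z. Proof. destruct Hwo as [_ [H _]]; apply H. Qed.
Lemma tot x y : x <: y \/ x = y \/ y <: x. Proof. destruct Hwo as [_ [_ [H _]]]; apply H. Qed.
Lemma wf : well_founded lt. Proof. destruct Hwo as [_ [_ [_ H]]]; apply H. Qed.
Lemma le_refl x : x <=: x. Proof. right; reflexivity. Qed.
Lemma le_lt x y z : x <=: y -> y <: z -> x <: z.
Proof. intros [H|<-] H2; [eapply tr; eauto| auto]. Qed.
Lemma lt_le x y z : x <: y -> y <=: z -> x <: z.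
Proof. intros H [H2|<-]; [eapply tr; eauto| auto]. Qed.
Lemma le_tr x y z : x <=: y -> y <=: z -> x <=: z.
Proof. intros [H|<-] H2; auto. left; eapply lt_le; eauto. Qed.
Lemma ltW x y : x <: y -> x <=: y. Proof. left; auto. Qed.
Lemma lt_not_le x y : x <: y -> y <=: x -> False.
Proof. intros H H2. apply (irr x). eapply lt_le; eauto. Qed.
Lemma not_lt_le x y : ~ x <: y -> y <=: x.
Proof. intros H. destruct (tot x y) as [H1|[H1|H1]]; [tauto|right; auto|left; auto]. Qed.
Lemma le_antisym x y : x <=: y -> y <=: x -> x = y.
Proof. intros [H|H] H2; auto. exfalso; eapply lt_not_le; eauto. Qed.
Lemma lt_neq x y : x <: y -> x = y -> False.
Proof. intros H ->. eapply irr; eauto. Qed.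

Lemma least (P : T -> Prop) : (exists x, P x) -> exists x, P x /\ forall y, P y -> x <=: y.
Proof.
  intros [x Hx]. revert Hx. induction x as [x IH] using (well_founded_ind wf).
  intros Hx. destruct (classic (exists y, P y /\ y <: x)) as [[y [Hy Hyx]]|Hn].
  - exact (IH y Hyx Hy).
  - exists x. split; auto. intros y Hy. apply not_lt_le. intro. apply Hn. eauto.
Qed.

Definition succ (c : T) : T := epsilon (inhabits rho) (fun z => is_succ_of lt z c).

Lemma succ_spec c : (exists z, c <: z) -> is_succ_of lt (succ c) c.
Proof.
  intros H. unfold succ. apply epsilon_spec.
  destruct (least (fun z => c <: z) H) as [z [Hz Hmin]]. exists z. split; auto.
Qed.

Lemma succ_unique a b c : is_succ_of lt a c -> is_succ_of lt b c -> a = b.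
Proof. intros [H1 H2] [H3 H4]. apply le_antisym; auto. Qed.

Lemma lt_succ_le b c a : is_succ_of lt b c -> a <: b -> a <=: c.
Proof.
  intros [H1 H2] H. apply not_lt_le. intro H3. apply H2 in H3. eapply lt_not_le; eauto.
Qed.

Lemma succ_lt_limit c y : limit lt y -> c <: y -> succ c <: y.
Proof.
  intros Hl H. destruct (succ_spec c (ex_intro _ y H)) as [H1 H2].
  destruct (H2 y H) as [H3|H3]; auto. exfalso. apply Hl. right. exists c.
  rewrite <- H3. apply succ_spec. eauto.
Qed.

Lemma succ_gt c y : c <: y -> c <: succ c.
Proof. intros H. apply (succ_spec c (ex_intro _ y H)). Qed.

Lemma succ_min c y z : c <: y -> c <: z -> succ c <=: z.
Proof. intros H H2. apply (succ_spec c (ex_intro _ y H)); auto. Qed.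

Definition LimIn c y m := limit lt m /\ c <: m /\ m <: y.
Definition StepSpec y c v :=
  ((exists m, LimIn c y m) /\ LimIn c y v /\ forall m, LimIn c y m -> f v <= f m) \/
  ((~ exists m, LimIn c y m) /\ v = succ c).
Definition step y c := epsilon (inhabits rho) (StepSpec y c).

Lemma step_spec y c : StepSpec y c (step y c).
Proof.
  unfold step. apply epsilon_spec.
  destruct (classic (exists m, LimIn c y m)) as [H|H].
  - destruct (nat_min (fun n => exists m, LimIn c y m /\ f m = n)) as [n [[m [Hm Hfm]] Hmin]].
    { destruct H as [m Hm]; eauto. }
    exists m. left. split; auto. split; auto. intros m' Hm'. subst n. apply Hmin. eauto.
  - exists (succ c). right; auto.
Qed.

Lemma step_bounds y c : limit lt y -> c <: y -> c <: step y c /\ step y c <: y.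
Proof.
  intros Hl H. destruct (step_spec y c) as [[_ [[_ [H1 H2]] _]]|[_ ->]]; auto.
  split; [eapply succ_gt; eauto| apply succ_lt_limit; auto].
Qed.

Lemma step_gap y c g : limit lt y -> c <: y -> c <: g -> g <: step y c -> limit lt (step y c).
Proof.
  intros Hl H H1 H2. destruct (step_spec y c) as [[_ [[H3 _] _]]|[_ E]]; auto.
  exfalso. rewrite E in H2. apply (lt_not_le _ _ H1). eapply lt_succ_le; eauto.
  apply succ_spec; eauto.
Qed.

Definition sq x y k := Nat.iter k (step y) x.
Lemma sq_S x y k : sq x y (S k) = step y (sq x y k). Proof. reflexivity. Qed.
Lemma sq_0 x y : sq x y 0 = x. Proof. reflexivity. Qed.

Section Seq.
Variables x y : T.
Hypothesis Hly : limit lt y.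
Hypothesis Hxy : x <: y.

Lemma sq_lt k : sq x y k <: y.
Proof. induction k; [exact Hxy|]. rewrite sq_S. apply step_bounds; auto. Qed.
Lemma sq_inc k : sq x y k <: sq x y (S k).
Proof. rewrite sq_S. apply step_bounds; auto. apply sq_lt. Qed.
Lemma sq_mono i j : i < j -> sq x y i <: sq x y j.
Proof.
  induction j; intros H; [lia|]. destruct (Nat.eq_dec i j) as [->|Hn]; [apply sq_inc|].
  eapply tr; [apply IHj; lia| apply sq_inc].
Qed.
Lemma sq_le_mono i j : i <= j -> sq x y i <=: sq x y j.
Proof. intros H. destruct (Nat.eq_dec i j) as [->|Hn]; [apply le_refl| left; apply sq_mono; lia]. Qed.
Lemma sq_ge_x k : x <=: sq x y k.
Proof. rewrite <- (sq_0 x y) at 1. apply sq_le_mono; lia. Qed.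
Lemma sq_lt_inv i j : sq x y i <: sq x y j -> i < j.
Proof. intros H. destruct (Nat.lt_ge_cases i j); auto. exfalso. eapply lt_not_le; [exact H|]. apply sq_le_mono; auto. Qed.
Lemma sq_le_inv i j : sq x y i <=: sq x y j -> i <= j.
Proof. intros H. destruct (Nat.le_gt_cases i j); auto. exfalso. eapply lt_not_le; [|exact H]. apply sq_mono; auto. Qed.
Lemma sq_inj i j : sq x y i = sq x y j -> i = j.
Proof. intros H. apply Nat.le_antisymm; apply sq_le_inv; rewrite H; apply le_refl. Qed.

Hypothesis Hylam : y <=: lam.

Lemma sq_cofinal z : z <: y -> exists k, z <: sq x y k.
Proof.
  intros Hz. apply NNPP; intro Hn.
  assert (Hb : forall k, sq x y k <: z).
  { intro k. assert (H : sq x y (S k) <=: z) by (apply not_lt_le; intro; apply Hn; eauto).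
    eapply lt_le; [apply sq_inc|exact H]. }
  destruct (least (fun u => forall k, sq x y k <: u)) as [sg [Hsg Hmin]]; [eauto|].
  assert (Hsz : sg <=: z) by (apply Hmin; auto).
  assert (Hsy : sg <: y) by (eapply le_lt; eauto).
  assert (Hlim : limit lt sg).
  { intros [H0|[w [Hw1 Hw2]]].
    - apply (H0 (sq x y 0)); auto.
    - destruct (classic (forall k, sq x y k <: w)) as [Hall|Hex].
      + apply Hmin in Hall. eapply lt_not_le; eauto.
      + apply not_all_ex_not in Hex. destruct Hex as [k Hk]. apply not_lt_le in Hk.
        assert (H1 : w <: sq x y (S k)) by (eapply le_lt; [exact Hk| apply sq_inc]).
        apply Hw2 in H1. eapply lt_not_le; [apply (Hsg (S k))| exact H1]. }
  assert (Hf' : forall k, f (sq x y (S k)) <= f sg).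
  { intro k. rewrite sq_S. destruct (step_spec y (sq x y k)) as [[_ [_ Hm]]|[Hno _]].
    - apply Hm. split; auto.
    - exfalso. apply Hno. exists sg. split; auto. }
  apply (php (fun k => f (sq x y (S k))) (f sg)); auto.
  intros i j H. assert (E : sq x y (S i) = sq x y (S j)).
  { apply Hf; auto; left; (eapply lt_le; [apply sq_lt | exact Hylam]). }
  apply sq_inj in E. lia.
Qed.

Lemma locate g : x <=: g -> g <: y -> exists j, sq x y j <=: g /\ g <: sq x y (S j).
Proof.
  intros H1 H2. destruct (nat_min (fun k => g <: sq x y k)) as [k [Hk Hmin]].
  { apply sq_cofinal; auto. }
  destruct k as [|j].
  - exfalso. rewrite sq_0 in Hk. eapply lt_not_le; eauto.
  - exists j. split; auto. apply not_lt_le. intro H. apply Hmin in H. lia.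
Qed.
End Seq.

Inductive Node : T -> T -> nat -> Prop :=
| Nroot : Node rho lam 1
| Nchild : forall x y e k, Node x y e -> limit lt (sq x y (S k)) ->
    Node (succ (sq x y k)) (sq x y (S k)) (e + S k).

Lemma node_inv x y e : Node x y e ->
  rho <=: x /\ x <: y /\ y <=: lam /\ limit lt y /\ isolated lt x /\ 1 <= e.
Proof.
  induction 1 as [|x y e k HN IH Hl].
  - repeat split; auto using le_refl.
  - destruct IH as [H1 [H2 [H3 [H4 [H5 H6]]]]].
    assert (Hk : sq x y k <: y) by (apply sq_lt; auto).
    assert (Hk1 : sq x y (S k) <: y) by (apply sq_lt; auto).
    repeat split.
    + left. eapply le_lt; [eapply le_tr; [exact H1| apply (sq_ge_x x y H4 H2 k)]| eapply succ_gt; exact Hk].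
    + apply succ_lt_limit; auto. apply sq_inc; auto.
    + left. eapply lt_le; eauto.
    + exact Hl.
    + right. exists (sq x y k). apply succ_spec. eauto.
    + lia.
Qed.

Definition InGap x1 y1 x2 y2 := exists k, sq x2 y2 k <: x1 /\ y1 <=: sq x2 y2 (S k).
Definition Rel x1 y1 x2 y2 := (x1 = x2 /\ y1 = y2) \/ InGap x1 y1 x2 y2 \/ InGap x2 y2 x1 y1 \/
  y1 <: x2 \/ y2 <: x1.

Lemma rel_sym a b c d : Rel a b c d -> Rel c d a b.
Proof. unfold Rel. intros [[-> ->]|[H|[H|[H|H]]]]; tauto. Qed.

Lemma ingap_bounds x1 y1 x2 y2 e2 : Node x2 y2 e2 -> InGap x1 y1 x2 y2 -> x2 <: x1 /\ y1 <: y2.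
Proof.
  intros HN [k [H1 H2]]. destruct (node_inv _ _ _ HN) as [_ [Hxy [_ [Hl _]]]]. split.
  - eapply le_lt; [apply sq_ge_x; eauto| exact H1].
  - eapply le_lt; [exact H2| apply sq_lt; auto].
Qed.

Lemma ingap_trans xa ya xb yb eb xc yc : Node xb yb eb ->
  InGap xa ya xb yb -> InGap xb yb xc yc -> InGap xa ya xc yc.
Proof.
  intros HB HAB [j [H1 H2]]. destruct (ingap_bounds _ _ _ _ _ HB HAB) as [H3 H4].
  exists j. split; [eapply tr; eauto| left; eapply lt_le; eauto].
Qed.

Lemma child_gap x y e k : Node x y e -> InGap (succ (sq x y k)) (sq x y (S k)) x y.
Proof.
  intros HN. destruct (node_inv _ _ _ HN) as [_ [Hxy [_ [Hl _]]]].
  exists k. split; [eapply succ_gt; apply sq_lt; eauto| apply le_refl].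
Qed.

Lemma root_rel x y e : Node x y e -> (x = rho /\ y = lam) \/ InGap x y rho lam.
Proof.
  induction 1 as [|x y e k HN IH Hl]; auto.
  right. destruct IH as [[-> ->]|G].
  - eapply child_gap; eauto.
  - eapply ingap_trans; [exact HN| eapply child_gap; eauto| exact G].
Qed.
Lemma case_ii xP yP eP k xQ yQ eQ m j :
  Node xP yP eP -> limit lt (sq xP yP (S k)) -> Node xQ yQ eQ -> limit lt (sq xQ yQ (S m)) ->
  sq xQ yQ j <: xP -> yP <=: sq xQ yQ (S j) ->
  Rel xP yP (succ (sq xQ yQ m)) (sq xQ yQ (S m)) ->
  Rel (succ (sq xP yP k)) (sq xP yP (S k)) (succ (sq xQ yQ m)) (sq xQ yQ (S m)).
Proof.
  intros HP HlP HQ HlQ Hj1 Hj2 HR.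
  destruct (node_inv _ _ _ HP) as [_ [HxyP [_ [HyP _]]]].
  destruct (node_inv _ _ _ HQ) as [_ [HxyQ [_ [HyQ _]]]].
  assert (Ftk : sq xP yP k <: succ (sq xP yP k)) by (eapply succ_gt; apply sq_lt; eauto).
  assert (FxP : xP <=: sq xP yP k) by (apply sq_ge_x; auto).
  assert (FtS : sq xP yP (S k) <: yP) by (apply sq_lt; auto).
  assert (Fum : sq xQ yQ m <: succ (sq xQ yQ m)) by (eapply succ_gt; apply sq_lt; eauto).
  assert (Fumy : sq xQ yQ m <: yQ) by (apply sq_lt; auto).
  destruct (lt_eq_lt_dec j m) as [[Hjm| <-]|Hjm].
  - right; right; right; left.
    eapply lt_le; [exact FtS|]. eapply le_tr; [exact Hj2|].
    left; eapply le_lt; [| exact Fum]; apply sq_le_mono; auto; lia.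
  - destruct HR as [[E1 E2]|[G|[G|[G|G]]]].
    + right; left. rewrite <- E1, <- E2. eapply child_gap; eauto.
    + right; left. eapply ingap_trans; [exact HP | eapply child_gap; eauto | exact G].
    + exfalso. destruct (ingap_bounds _ _ _ _ _ HP G) as [G1 _].
      eapply lt_not_le; [exact G1|]. eapply succ_min; eauto.
    + exfalso. eapply lt_not_le; [exact G|]. left. eapply le_lt; [|exact HxyP].
      eapply succ_min; eauto.
    + exfalso. apply (irr xP). eapply tr; [exact HxyP|]. eapply le_lt; [exact Hj2| exact G].
  - right; right; right; right.
    eapply le_lt; [apply (sq_le_mono xQ yQ HyQ HxyQ (S m) j); exact Hjm|].
    eapply lt_le; [exact Hj1|]. eapply le_tr; [exact FxP|]. left; exact Ftk.
Qed.

Lemma rel_all n : forall x1 y1 e1 x2 y2 e2, e1 + e2 <= n -> Node x1 y1 e1 -> Node x2 y2 e2 ->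
  Rel x1 y1 x2 y2.
Proof.
  induction n as [|n IH]; intros x1 y1 e1 x2 y2 e2 Hn H1 H2.
  - exfalso. destruct (node_inv _ _ _ H1) as [_ [_ [_ [_ [_ He]]]]]. lia.
  - destruct H1 as [|xP yP eP k HP HlP].
    + destruct (root_rel _ _ _ H2) as [[-> ->]|G]; unfold Rel; tauto.
    + destruct H2 as [|xQ yQ eQ m HQ HlQ].
      * destruct (root_rel _ _ _ (Nchild _ _ _ _ HP HlP)) as [[-> ->]|G]; unfold Rel; tauto.
      * destruct (node_inv _ _ _ HP) as [_ [HxyP [_ [HyP _]]]].
        destruct (node_inv _ _ _ HQ) as [_ [HxyQ [_ [HyQ _]]]].
        destruct (IH xP yP eP xQ yQ eQ ltac:(lia) HP HQ) as [[<- <-]|[[j [Hj1 Hj2]]|[[j [Hj1 Hj2]]|[Hd|Hd]]]].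
        -- destruct (lt_eq_lt_dec k m) as [[Hkm| <-]|Hkm].
           ++ right; right; right; left. eapply le_lt; [apply (sq_le_mono xP yP HyP HxyP (S k) m); exact Hkm|].
              eapply succ_gt; apply sq_lt; eauto.
           ++ left; auto.
           ++ right; right; right; right. eapply le_lt; [apply (sq_le_mono xP yP HyP HxyP (S m) k); exact Hkm|].
              eapply succ_gt; apply sq_lt; eauto.
        -- eapply case_ii; eauto. apply IH with eP (eQ + S m); auto; [lia| apply Nchild; auto].
        -- apply rel_sym. eapply case_ii; eauto. apply IH with eQ (eP + S k); auto; [lia| apply Nchild; auto].
        -- right; right; right; left.
           eapply tr; [apply (sq_lt xP yP HyP HxyP (S k))|]. eapply tr; [exact Hd|].
           eapply le_lt; [apply (sq_ge_x xQ yQ HyQ HxyQ m)| eapply succ_gt; apply (sq_lt xQ yQ HyQ HxyQ m)].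
        -- right; right; right; right.
           eapply tr; [apply (sq_lt xQ yQ HyQ HxyQ (S m))|]. eapply tr; [exact Hd|].
           eapply le_lt; [apply (sq_ge_x xP yP HyP HxyP k)| eapply succ_gt; apply (sq_lt xP yP HyP HxyP k)].
Qed.

Lemma rel x1 y1 e1 x2 y2 e2 : Node x1 y1 e1 -> Node x2 y2 e2 -> Rel x1 y1 x2 y2.
Proof. intros; eapply rel_all; eauto. Qed.
Lemma node_cases x y e : Node x y e -> (x = rho /\ y = lam /\ e = 1) \/
  exists x0 y0 e0 k0, Node x0 y0 e0 /\ limit lt (sq x0 y0 (S k0)) /\ x = succ (sq x0 y0 k0) /\
    y = sq x0 y0 (S k0) /\ e = e0 + S k0.
Proof. destruct 1; [left; auto| right; eauto 10]. Qed.

Lemma child_not_root x0 y0 e0 k0 : Node x0 y0 e0 -> sq x0 y0 (S k0) = lam -> False.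
Proof.
  intros HQ E. destruct (node_inv _ _ _ HQ) as [_ [Hxy [Hyl [Hl _]]]].
  eapply lt_not_le; [| exact Hyl]. rewrite <- E. apply sq_lt; auto.
Qed.

Lemma par_contra x y e x0 y0 e0 k k0 : Node x y e -> Node x0 y0 e0 -> InGap x y x0 y0 ->
  succ (sq x0 y0 k0) = succ (sq x y k) -> sq x0 y0 (S k0) = sq x y (S k) -> False.
Proof.
  intros HP HQ [j [Hj1 Hj2]] E1 E2.
  destruct (node_inv _ _ _ HP) as [_ [Hxy [_ [Hy _]]]].
  destruct (node_inv _ _ _ HQ) as [_ [Hxy0 [_ [Hy0 _]]]].
  assert (A : sq x0 y0 j <: succ (sq x0 y0 k0)).
  { rewrite E1. eapply le_lt; [| eapply succ_gt; apply (sq_lt x y Hy Hxy k)].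
    eapply le_tr; [left; exact Hj1| apply sq_ge_x; auto]. }
  assert (A2 : sq x0 y0 j <=: sq x0 y0 k0).
  { eapply lt_succ_le; [apply succ_spec; exists y0; apply sq_lt; auto| exact A]. }
  apply sq_le_inv in A2; auto.
  assert (B : sq x0 y0 (S k0) <: sq x0 y0 (S j)).
  { rewrite E2. eapply lt_le; [apply sq_lt; auto| exact Hj2]. }
  apply sq_lt_inv in B; auto. lia.
Qed.

Lemma e_unique x y e1 e2 : Node x y e1 -> Node x y e2 -> e1 = e2.
Proof.
  intros H1. revert e2. induction H1 as [|x y e k HP IH Hl]; intros e2 H2.
  - destruct (node_cases _ _ _ H2) as [[_ [_ ->]]|[x0 [y0 [e0 [k0 [HQ [_ [_ [E _]]]]]]]]]; auto.
    exfalso. eapply child_not_root; eauto.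
  - destruct (node_cases _ _ _ H2) as [[_ [E _]]|[x0 [y0 [e0 [k0 [HQ [Hl0 [E1 [E2 ->]]]]]]]]].
    + exfalso. eapply child_not_root; [exact HP| exact E].
    + destruct (node_inv _ _ _ HP) as [_ [Hxy [_ [Hy _]]]].
      destruct (node_inv _ _ _ HQ) as [_ [Hxy0 [_ [Hy0 _]]]].
      destruct (rel _ _ _ _ _ _ HP HQ) as [[<- <-]|[G|[G|[G|G]]]].
      * assert (S k = S k0) by (apply (sq_inj x y Hy Hxy); first [exact E2| symmetry; exact E2]). assert (k0 = k) by lia. subst k0. rewrite (IH e0 HQ). lia.
      * exfalso. eapply par_contra; [exact HP| exact HQ| exact G| |]; eauto.
      * exfalso. eapply par_contra; [exact HQ| exact HP| exact G| |]; eauto.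
      * exfalso. apply (irr y). eapply tr; [exact G|]. eapply le_lt; [apply (sq_ge_x x0 y0 Hy0 Hxy0 k0)|].
        eapply tr; [apply (sq_inc x0 y0 Hy0 Hxy0 k0)|]. first [rewrite <- E2 | rewrite E2]; apply sq_lt; auto.
      * exfalso. apply (irr y0). eapply tr; [exact G|]. eapply le_lt; [apply (sq_ge_x x y Hy Hxy k)|].
        eapply tr; [apply (sq_inc x y Hy Hxy k)|]. first [rewrite E2 | rewrite <- E2]; apply sq_lt; auto.
Qed.

Lemma cover : forall y x e, Node x y e -> forall g, x <=: g -> g <: y ->
  exists x' y' e' k, Node x' y' e' /\ sq x' y' k = g /\ e <= e' /\ y' <=: y.
Proof.
  intros y. induction y as [y IHy] using (well_founded_ind wf).
  intros x e HN g H1 H2.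
  destruct (node_inv _ _ _ HN) as [_ [Hxy [Hyl [Hy _]]]].
  destruct (locate x y Hy Hxy Hyl g H1 H2) as [j [[Hlt|Heq] Hj2]].
  - assert (Hl : limit lt (sq x y (S j))).
    { rewrite sq_S. rewrite sq_S in Hj2. eapply step_gap; eauto. apply sq_lt; auto. }
    assert (HC := Nchild _ _ _ _ HN Hl).
    destruct (IHy (sq x y (S j)) (sq_lt x y Hy Hxy (S j)) _ _ HC g) as [x' [y' [e' [k [H3 [H4 [H5 H6]]]]]]].
    + eapply succ_min; [apply (sq_lt x y Hy Hxy j)| exact Hlt].
    + exact Hj2.
    + exists x', y', e', k. repeat split; auto; [lia|]. left. eapply le_lt; [exact H6| apply sq_lt; auto].
  - exists x, y, e, j. repeat split; auto using le_refl.
Qed.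

Lemma pos_gap x1 y1 e1 k1 x2 y2 e2 k2 : Node x1 y1 e1 -> Node x2 y2 e2 -> InGap x1 y1 x2 y2 ->
  sq x1 y1 k1 = sq x2 y2 k2 -> False.
Proof.
  intros H1 H2 [j [Hj1 Hj2]] E.
  destruct (node_inv _ _ _ H1) as [_ [Hxy1 [_ [Hy1 _]]]].
  destruct (node_inv _ _ _ H2) as [_ [Hxy2 [_ [Hy2 _]]]].
  assert (A : sq x2 y2 j <: sq x2 y2 k2).
  { rewrite <- E. eapply lt_le; [exact Hj1| apply sq_ge_x; auto]. }
  assert (B : sq x2 y2 k2 <: sq x2 y2 (S j)).
  { rewrite <- E. eapply lt_le; [apply sq_lt; auto| exact Hj2]. }
  apply sq_lt_inv in A; auto. apply sq_lt_inv in B; auto. lia.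
Qed.

Lemma pos_unique x1 y1 e1 k1 x2 y2 e2 k2 : Node x1 y1 e1 -> Node x2 y2 e2 ->
  sq x1 y1 k1 = sq x2 y2 k2 -> x1 = x2 /\ y1 = y2 /\ k1 = k2 /\ e1 = e2.
Proof.
  intros H1 H2 E.
  destruct (node_inv _ _ _ H1) as [_ [Hxy1 [_ [Hy1 _]]]].
  destruct (node_inv _ _ _ H2) as [_ [Hxy2 [_ [Hy2 _]]]].
  destruct (rel _ _ _ _ _ _ H1 H2) as [[<- <-]|[G|[G|[G|G]]]].
  - apply sq_inj in E; auto. repeat split; auto. eapply e_unique; eauto.
  - exfalso; eapply pos_gap; [exact H1| exact H2| exact G| exact E].
  - exfalso; eapply pos_gap; [exact H2| exact H1| exact G| symmetry; exact E].
  - exfalso. apply (irr y1). eapply tr; [exact G|]. eapply le_lt; [apply (sq_ge_x x2 y2 Hy2 Hxy2 k2)|].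
    rewrite <- E. apply sq_lt; auto.
  - exfalso. apply (irr y2). eapply tr; [exact G|]. eapply le_lt; [apply (sq_ge_x x1 y1 Hy1 Hxy1 k1)|].
    rewrite E. apply sq_lt; auto.
Qed.

Lemma top_unique x1 e1 x2 e2 y : Node x1 y e1 -> Node x2 y e2 -> x1 = x2 /\ e1 = e2.
Proof.
  intros H1 H2.
  destruct (node_inv _ _ _ H1) as [_ [Hxy1 _]].
  destruct (node_inv _ _ _ H2) as [_ [Hxy2 _]].
  destruct (rel _ _ _ _ _ _ H1 H2) as [[<- _]|[G|[G|[G|G]]]].
  - split; auto. eapply e_unique; eauto.
  - exfalso. destruct (ingap_bounds _ _ _ _ _ H2 G) as [_ G2]. eapply irr; eauto.
  - exfalso. destruct (ingap_bounds _ _ _ _ _ H1 G) as [_ G2]. eapply irr; eauto.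
  - exfalso. eapply irr; eapply tr; [exact G| exact Hxy2].
  - exfalso. eapply irr; eapply tr; [exact G| exact Hxy1].
Qed.

Lemma top_cover mu : limit lt mu -> rho <: mu -> mu <=: lam -> exists x e, Node x mu e.
Proof.
  intros Hl H1 H2. destruct (classic (mu = lam)) as [->|Hn]; [eauto using Nroot|].
  assert (H3 : mu <: lam) by (destruct H2; tauto).
  destruct (cover _ _ _ Nroot mu (ltW _ _ H1) H3) as [x' [y' [e' [k [HN [E _]]]]]].
  destruct k as [|j].
  - exfalso. destruct (node_inv _ _ _ HN) as [_ [_ [_ [_ [Hi _]]]]]. rewrite sq_0 in E. rewrite <- E in Hl. exact (Hl Hi).
  - rewrite <- E in Hl. exists (succ (sq x' y' j)), (e' + S j). rewrite <- E. apply Nchild; auto.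
Qed.
Definition dia b := epsilon (inhabits rho) (fun y => exists x e k, Node x y e /\ sq x y k = b).
Definition ell b := if excluded_middle_informative (b = lam) then 1 else
  epsilon (inhabits 0) (fun n => exists x y e k, Node x y e /\ sq x y k = b /\ n = e + k).
Definition xof mu := epsilon (inhabits rho) (fun x => exists e, Node x mu e).
Definition aa mu k := sq (xof mu) mu k.

Lemma dia_spec x y e k : Node x y e -> dia (sq x y k) = y.
Proof.
  intros HN. unfold dia.
  assert (Hex : exists y', exists x' e' k', Node x' y' e' /\ sq x' y' k' = sq x y k) by (exists y, x, e, k; auto).
  destruct (epsilon_spec (inhabits rho) _ Hex) as [x' [e' [k' [HN' E]]]].
  destruct (pos_unique _ _ _ _ _ _ _ _ HN' HN E) as [_ [H _]]. exact H.
Qed.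

Lemma ell_lam : ell lam = 1.
Proof. unfold ell. destruct (excluded_middle_informative _); congruence. Qed.

Lemma ell_spec x y e k : Node x y e -> ell (sq x y k) = e + k.
Proof.
  intros HN. destruct (node_inv _ _ _ HN) as [_ [Hxy [Hyl [Hy _]]]].
  unfold ell. destruct (excluded_middle_informative _) as [E|Hn].
  - exfalso. eapply lt_not_le; [| exact Hyl]. rewrite <- E. apply sq_lt; auto.
  - assert (Hex : exists n, exists x' y' e' k', Node x' y' e' /\ sq x' y' k' = sq x y k /\ n = e' + k') by (exists (e + k), x, y, e, k; auto).
    destruct (epsilon_spec (inhabits 0) _ Hex) as [x' [y' [e' [k' [HN' [E ->]]]]]].
    destruct (pos_unique _ _ _ _ _ _ _ _ HN' HN E) as [_ [_ [-> ->]]]. reflexivity.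
Qed.

Lemma xof_spec x mu e : Node x mu e -> xof mu = x.
Proof.
  intros HN. unfold xof.
  assert (Hex : exists x', exists e', Node x' mu e') by (exists x, e; auto).
  destruct (epsilon_spec (inhabits rho) _ Hex) as [e' HN'].
  destruct (top_unique _ _ _ _ _ HN' HN) as [H _]. exact H.
Qed.

Lemma ell_top x mu e : Node x mu e -> ell mu = e.
Proof.
  intros HN. destruct (node_inv _ _ _ HN) as [Hrx [Hxy [Hyl [Hy _]]]].
  destruct (classic (mu = lam)) as [->|Hn].
  - rewrite ell_lam. destruct (top_unique _ _ _ _ _ HN Nroot) as [_ ->]; auto.
  - assert (H3 : mu <: lam) by (destruct Hyl; tauto).
    assert (H4 : rho <=: mu) by (left; eapply le_lt; eauto).
    destruct (cover _ _ _ Nroot mu H4 H3) as [x' [y' [e' [k [HN' [E _]]]]]].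
    destruct k as [|j].
    + exfalso. destruct (node_inv _ _ _ HN') as [_ [_ [_ [_ [Hi _]]]]]. rewrite sq_0 in E.
      rewrite <- E in Hy. exact (Hy Hi).
    + rewrite <- E in Hy. pose proof (Nchild _ _ _ _ HN' Hy) as HC. rewrite E in HC.
      destruct (top_unique _ _ _ _ _ HN HC) as [_ ->]. rewrite <- E. apply ell_spec; auto.
Qed.

Lemma chain x y e : Node x y e -> forall k, exists s, 0 < s /\
  (forall i, i < s -> Nat.iter i dia (sq x y k) <: Nat.iter (S i) dia (sq x y k)) /\
  Nat.iter s dia (sq x y k) = lam.
Proof.
  induction 1 as [|x y e j HP IH Hl]; intros k.
  - exists 1. split; [lia|]. split.
    + intros i Hi. assert (i = 0) by lia. subst. simpl. rewrite (dia_spec _ _ _ _ Nroot). apply sq_lt; auto.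
    + simpl. apply (dia_spec _ _ _ _ Nroot).
  - pose proof (Nchild _ _ _ _ HP Hl) as HC.
    destruct (node_inv _ _ _ HC) as [_ [Hxy [_ [Hy _]]]].
    destruct (IH (S j)) as [s [Hs0 [Hch Hend]]].
    exists (S s). split; [lia|]. split.
    + intros i Hi. destruct i as [|i].
      * simpl. rewrite (dia_spec _ _ _ _ HC). apply sq_lt; auto.
      * rewrite (Nat.iter_succ_r i), (Nat.iter_succ_r (S i)). rewrite (dia_spec _ _ _ _ HC). apply Hch; lia.
    + rewrite Nat.iter_succ_r, (dia_spec _ _ _ _ HC). exact Hend.
Qed.

Theorem main_sec :
  exists (dia : T -> T) (ell : T -> nat) (a : T -> nat -> T),
    (forall b, in_co lt rho lam b -> in_LIM_oc lt rho lam (dia b)) /\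
    (forall mu, in_LIM_oc lt rho lam mu -> exists b, in_co lt rho lam b /\ dia b = mu) /\
    (forall b, in_cc lt rho lam b -> 0 < ell b) /\
    (forall mu k, in_LIM_oc lt rho lam mu -> in_co lt rho lam (a mu k)) /\
    (forall b, in_co lt rho lam b ->
       exists s, 0 < s /\
         (forall k, k < s -> lt (Nat.iter k dia b) (Nat.iter (S k) dia b)) /\
         Nat.iter s dia b = lam) /\
    (forall mu, in_LIM_oc lt rho lam mu ->
       increasing_to lt (a mu) mu /\
       (forall b, in_co lt rho lam b -> (dia b = mu <-> exists k, a mu k = b)) /\
       (forall k, ell (a mu k) = ell mu + k)) /\
    ell lam = 1 /\ ell rho = 1 /\
    (forall b g, in_co lt rho lam b -> in_oo lt b (dia b) g ->
       ell b < ell g /\ le lt (dia g) (dia b)) /\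
    (forall b b1, in_co lt rho lam b -> is_succ_of lt b1 b -> ell b1 = ell b + 1).
Proof.
  exists dia, ell, aa.
  unfold in_LIM_oc, in_oc, in_co, in_cc, in_oo.
  split; [|split; [|split; [|split; [|split; [|split; [|split; [|split; [|split]]]]]]]].
  - intros b [H1 H2]. destruct (cover _ _ _ Nroot b H1 H2) as [x [y [e [k [HN [<- _]]]]]].
    rewrite (dia_spec _ _ _ _ HN). destruct (node_inv _ _ _ HN) as [Hrx [Hxy [Hyl [Hy _]]]].
    split; [split|]; auto. eapply le_lt; eauto.
  - intros mu [[H1 H2] H3]. destruct (top_cover mu H3 H1 H2) as [x [e HN]].
    destruct (node_inv _ _ _ HN) as [Hrx [Hxy [Hyl [Hy _]]]].
    exists x. split; [split; auto; eapply lt_le; eauto|].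
    pose proof (dia_spec x mu e 0 HN) as D. rewrite sq_0 in D. exact D.
  - intros b [H1 H2]. destruct (classic (b = lam)) as [->|Hn]; [rewrite ell_lam; lia|].
    assert (H3 : b <: lam) by (destruct H2; tauto).
    destruct (cover _ _ _ Nroot b H1 H3) as [x [y [e [k [HN [<- _]]]]]].
    rewrite (ell_spec _ _ _ _ HN). destruct (node_inv _ _ _ HN) as [_ [_ [_ [_ [_ He]]]]]. lia.
  - intros mu k [[H1 H2] H3]. destruct (top_cover mu H3 H1 H2) as [x [e HN]].
    destruct (node_inv _ _ _ HN) as [Hrx [Hxy [Hyl [Hy _]]]].
    unfold aa. rewrite (xof_spec _ _ _ HN). split.
    + eapply le_tr; [exact Hrx| apply sq_ge_x; auto].
    + eapply lt_le; [apply sq_lt; auto| exact H2].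
  - intros b [H1 H2]. destruct (cover _ _ _ Nroot b H1 H2) as [x [y [e [k [HN [<- _]]]]]].
    apply (chain _ _ _ HN).
  - intros mu [[H1 H2] H3]. destruct (top_cover mu H3 H1 H2) as [x [e HN]].
    destruct (node_inv _ _ _ HN) as [Hrx [Hxy [Hyl [Hy _]]]].
    assert (Ha : forall k, aa mu k = sq x mu k) by (intro; unfold aa; rewrite (xof_spec _ _ _ HN); reflexivity).
    split; [|split].
    + split; [|split].
      * intros k. rewrite !Ha. apply sq_inc; auto.
      * intros k. rewrite Ha. apply sq_lt; auto.
      * intros g Hg. destruct (sq_cofinal x mu Hy Hxy H2 g Hg) as [k Hk]. exists k. rewrite Ha; auto.
    + intros b [Hb1 Hb2]. split.
      * intros Hd. destruct (cover _ _ _ Nroot b Hb1 Hb2) as [x' [y' [e' [k' [HN' [<- _]]]]]].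
        rewrite (dia_spec _ _ _ _ HN') in Hd. subst y'. exists k'. rewrite Ha.
        destruct (top_unique _ _ _ _ _ HN HN') as [-> _]. reflexivity.
      * intros [k <-]. rewrite Ha. apply (dia_spec _ _ _ _ HN).
    + intros k. rewrite Ha, (ell_spec _ _ _ _ HN), (ell_top _ _ _ HN). reflexivity.
  - exact ell_lam.
  - pose proof (ell_spec _ _ _ 0 Nroot) as E. rewrite sq_0 in E. rewrite E. reflexivity.
  - intros b g [Hb1 Hb2] [Hg1 Hg2].
    destruct (cover _ _ _ Nroot b Hb1 Hb2) as [x [y [e [k [HN [<- _]]]]]].
    rewrite (dia_spec _ _ _ _ HN) in Hg2 |- *.
    destruct (node_inv _ _ _ HN) as [Hrx [Hxy [Hyl [Hy _]]]].
    assert (Hxg : x <=: g) by (eapply le_tr; [apply (sq_ge_x x y Hy Hxy k)| left; exact Hg1]).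
    destruct (locate x y Hy Hxy Hyl g Hxg Hg2) as [j [[Hlt|Heq] Hj2]].
    + assert (Hkj : k < S j) by (apply (sq_lt_inv x y Hy Hxy); exact (tr _ _ _ Hg1 Hj2)).
      assert (Hl : limit lt (sq x y (S j))).
      { rewrite sq_S. rewrite sq_S in Hj2. eapply step_gap; eauto. apply sq_lt; auto. }
      pose proof (Nchild _ _ _ _ HN Hl) as HC.
      destruct (cover _ _ _ HC g) as [x' [y' [e' [k' [HN' [<- [He Hle]]]]]]].
      { eapply succ_min; [apply (sq_lt x y Hy Hxy j)| exact Hlt]. }
      { exact Hj2. }
      rewrite (ell_spec _ _ _ _ HN), (ell_spec _ _ _ _ HN'), (dia_spec _ _ _ _ HN'). split; [lia|].
      left. eapply le_lt; [exact Hle| apply sq_lt; auto].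
    + subst g. assert (Hkj : k < j) by (apply (sq_lt_inv x y Hy Hxy); exact Hg1).
      rewrite (ell_spec _ _ _ _ HN), (ell_spec _ _ _ _ HN), (dia_spec _ _ _ _ HN).
      split; [lia| apply le_refl].
  - intros b b1 [Hb1 Hb2] Hs.
    destruct (cover _ _ _ Nroot b Hb1 Hb2) as [x [y [e [k [HN [<- _]]]]]].
    destruct (node_inv _ _ _ HN) as [Hrx [Hxy [Hyl [Hy _]]]].
    pose proof Hs as [Hs1 Hs2].
    destruct (Hs2 _ (sq_inc x y Hy Hxy k)) as [Hlt|Heq].
    + assert (Hl : limit lt (sq x y (S k))).
      { rewrite sq_S. rewrite sq_S in Hlt. eapply step_gap; eauto. apply sq_lt; auto. }
      pose proof (Nchild _ _ _ _ HN Hl) as HC.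
      assert (Es : succ (sq x y k) = b1).
      { eapply succ_unique; [apply succ_spec; exists y; apply sq_lt; auto| exact Hs]. }
      pose proof (ell_spec _ _ _ 0 HC) as E. rewrite sq_0, Es in E. rewrite E, (ell_spec _ _ _ _ HN). lia.
    + rewrite Heq, (ell_spec _ _ _ _ HN), (ell_spec _ _ _ _ HN). lia.
Qed.
End S.

Theorem lemma3p1 (T : Type) (lt : T -> T -> Prop) (Hwo : is_well_order lt)
  (lam rho : T) (Hlam : limit lt lam) (Hcount : countable_upto lt lam)
  (Hrho : isolated lt rho) (Hrl : lt rho lam) :
  exists (dia : T -> T) (ell : T -> nat) (a : T -> nat -> T),
    (* dia : [rho,lam) -> LIM((rho,lam]) surjective *)
    (forall b, in_co lt rho lam b -> in_LIM_oc lt rho lam (dia b)) /\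
    (forall mu, in_LIM_oc lt rho lam mu -> exists b, in_co lt rho lam b /\ dia b = mu) /\
    (* ell : [rho,lam] -> omega \ {0} *)
    (forall b, in_cc lt rho lam b -> 0 < ell b) /\
    (* a : LIM((rho,lam]) x omega -> [rho,lam) *)
    (forall mu k, in_LIM_oc lt rho lam mu -> in_co lt rho lam (a mu k)) /\
    (* (a) *)
    (forall b, in_co lt rho lam b ->
       exists s, 0 < s /\
         (forall k, k < s -> lt (Nat.iter k dia b) (Nat.iter (S k) dia b)) /\
         Nat.iter s dia b = lam) /\
    (* (b) *)
    (forall mu, in_LIM_oc lt rho lam mu ->
       increasing_to lt (a mu) mu /\
       (forall b, in_co lt rho lam b -> (dia b = mu <-> exists k, a mu k = b)) /\
       (forall k, ell (a mu k) = ell mu + k)) /\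
    ell lam = 1 /\ ell rho = 1 /\
    (* (c) *)
    (forall b g, in_co lt rho lam b -> in_oo lt b (dia b) g ->
       ell b < ell g /\ le lt (dia g) (dia b)) /\
    (* (d) *)
    (forall b b1, in_co lt rho lam b -> is_succ_of lt b1 b -> ell b1 = ell b + 1).
Proof.
  destruct Hcount as [f Hf].
  eapply main_sec; eauto.
Qed.
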